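(* Let $Z$ be a countable well-partially-ordered set and let $n\in\mathbb{N}$. For every $z\in Z$, $\mathrm{rk}(z)<\omega\cdot n$ if and only if $z\in A_n(Z)$.
   Context: A well partial order (wpo) is a partial order in which every infinite sequence $x_0,x_1,\dots$ has $i<j$ with $x_i\le x_j$. The rank of $z$ in a well-founded poset $Z$ is $\mathrm{rk}(z)=\sup\{\mathrm{rk}(y)+1: y<z\}$ ($\sup\emptyset=0$). An acceleration candidate is a strictly increasing sequence $z_0<z_1<\cdots$; it goes through a set $A$ if some $z_i\in A$, and is below $z$ if $z_i\le z$ for all $i$. Define $A_0(Z)=\emptyset$ and, for an ordinal $\alpha>0$, $A_\alpha(Z)$ as the set of $z\in Z$ such that every acceleration candidate below $z$ goes through $A_\beta(Z)$ for some $\beta<\alpha$. *)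

(* Defs.v *)
From Stdlib Require Import Arith.

Set Implicit Arguments.

Section Defs.
Variable Z : Type.
Variable le : Z -> Z -> Prop.

Definition lt (x y : Z) : Prop := le x y /\ x <> y.

Definition is_partial_order : Prop :=
  (forall x, le x x) /\
  (forall x y, le x y -> le y x -> x = y) /\
  (forall x y w, le x y -> le y w -> le x w).

Definition is_wpo : Prop :=
  is_partial_order /\
  forall f : nat -> Z, exists i j, i < j /\ le (f i) (f j).

Definition countable : Prop :=
  exists g : Z -> nat, forall x y, g x = g y -> x = y.

(* Ordinals below omega^2: (a, b) encodes omega*a + b, ordered lexicographically. *)
Definition olt (p q : nat * nat) : Prop :=
  fst p < fst q \/ (fst p = fst q /\ snd p < snd q).

(* rk_le z (a,b)  <->  rk(z) <= omega*a + b, where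
   rk(z) = sup { rk(y)+1 : y < z }.  Indeed rk(z) <= beta iff
   every y < z has rk(y) < beta, i.e. rk(y) <= gamma for some gamma < beta. *)
Inductive rk_le (z : Z) (p : nat * nat) : Prop :=
  | rk_le_intro :
      (forall y, lt y z -> exists q, olt q p /\ rk_le y q) -> rk_le z p.

Definition rank_lt_omega_mul (z : Z) (n : nat) : Prop :=
  exists p : nat * nat, fst p < n /\ rk_le z p.

Definition acc_cand (s : nat -> Z) : Prop := forall i, lt (s i) (s (S i)).
Definition goes_through (s : nat -> Z) (A : Z -> Prop) : Prop := exists i, A (s i).
Definition below (s : nat -> Z) (z : Z) : Prop := forall i, le (s i) z.

(* Given B = union_{beta < alpha} A_beta, the set A_alpha *)
Definition Anext (B : Z -> Prop) (z : Z) : Prop :=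
  forall s, acc_cand s -> below s z -> goes_through s B.

(* Aupto k = union_{beta <= k} A_beta *)
Fixpoint Aupto (k : nat) : Z -> Prop :=
  match k with
  | 0 => fun _ => False
  | S k' => fun z => Aupto k' z \/ Anext (Aupto k') z
  end.

Definition A (n : nat) : Z -> Prop :=
  match n with
  | 0 => fun _ => False
  | S k => Anext (Aupto k)
  end.
End Defs.

(* Main.v *)
Require Import Defs.
From Stdlib Require Import Arith.
From Stdlib Require Import Lia Classical ClassicalEpsilon.

Section S.
Variable Z : Type.
Variable le : Z -> Z -> Prop.
Hypothesis Hpo : is_partial_order le.
Hypothesis Hwqo : forall f : nat -> Z, exists i j, i < j /\ le (f i) (f j).

Notation ltz := (lt le).
Notation cid := constructive_indefinite_description.

Lemma lt_le_trans x y w : ltz x y -> le y w -> ltz x w.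
Proof.
  destruct Hpo as [Hr [Ha Ht]]. intros [H1 H2] H3. split. eauto.
  intro E; subst. apply H2. apply Ha; auto.
Qed.

Lemma lt_trans' x y w : ltz x y -> ltz y w -> ltz x w.
Proof. intros H1 H2. apply lt_le_trans with y; auto. apply H2. Qed.

Lemma olt_trans p q r : olt p q -> olt q r -> olt p r.
Proof. destruct p, q, r; unfold olt; simpl; lia. Qed.

Lemma rk_mono z p p' : rk_le le z p -> (olt p p' \/ p = p') -> rk_le le z p'.
Proof.
  intros H Hp. destruct Hp as [Hp|<-]; [|exact H].
  destruct H as [H]. constructor. intros y Hy.
  destruct (H y Hy) as [q [Hq Hr]]. exists q; split; [eapply olt_trans; eauto|exact Hr].
Qed.

Lemma fwd_L n s (Hs : acc_cand le s) : forall c i x, ltz (s (i+c)) x -> rk_le le x (n,c) ->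
  exists j q, fst q < n /\ rk_le le (s j) q.
Proof.
  induction c as [|c IH]; intros i x Hlt Hx; destruct Hx as [Hx];
  destruct (Hx _ Hlt) as [[a b] [Hq Hr]]; unfold olt in Hq; simpl in Hq.
  - exists (i+0), (a,b); simpl; split; [lia|auto].
  - destruct (Nat.lt_ge_cases a n).
    + exists (i + S c), (a,b); simpl; auto.
    + apply (IH i (s (i + S c))).
      * replace (i + S c) with (S (i + c)) by lia; apply Hs.
      * apply rk_mono with (a,b); [exact Hr|].
        destruct (Nat.eq_dec b c); [right; f_equal; lia| left; unfold olt; simpl; lia].
Qed.

Lemma fwd k (B : Z -> Prop) (HB : forall z, rank_lt_omega_mul le z k -> B z) z :
  rank_lt_omega_mul le z (S k) -> Anext le B z.
Proof.
  intros [[a b] [Ha Hr]] s Hs Hb. simpl in Ha.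
  assert (H : ltz (s (0 + b)) z) by (apply lt_le_trans with (s (S b)); [apply Hs | apply Hb]).
  destruct (fwd_L k s Hs b 0 z H) as [j [q [Hq Hr']]].
  - apply rk_mono with (a,b); auto. unfold olt; simpl.
    destruct (Nat.eq_dec a k); [subst; right; reflexivity | left; lia].
  - exists j. apply HB. exists q. auto.
Qed.

Lemma ramsey (f : nat -> Z) : exists phi : nat -> nat,
  (forall i, phi i < phi (S i)) /\ forall i, le (f (phi i)) (f (phi (S i))).
Proof.
  assert (HN : exists N, forall i, N <= i -> exists j, i < j /\ le (f i) (f j)).
  { apply NNPP. intro Hn.
    assert (Hterm : forall N, exists i, N <= i /\ forall j, i < j -> ~ le (f i) (f j)).
    { intro N. apply NNPP; intro H2. apply Hn. exists N. intros i Hi.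
      apply NNPP; intro H3. apply H2. exists i. split; auto.
      intros j Hj Hle. apply H3. eauto. }
    pose (t := fun N => proj1_sig (cid _ (Hterm N))).
    assert (Ht : forall N, N <= t N /\ forall j, t N < j -> ~ le (f (t N)) (f j))
      by (intro N; exact (proj2_sig (cid _ (Hterm N)))).
    pose (g := fix g n := match n with 0 => t 0 | S n => t (S (g n)) end).
    assert (Hg : forall i j, i < j -> g i < g j).
    { intros i j Hij. induction Hij.
      - simpl. destruct (Ht (S (g i))); lia.
      - simpl. destruct (Ht (S (g m))); lia. }
    assert (Hgt : forall i j, g i < j -> ~ le (f (g i)) (f j))
      by (intros [|i]; simpl; apply Ht).
    destruct (Hwqo (fun n => f (g n))) as [i [j [Hij Hle]]].
    exact (Hgt i (g j) (Hg i j Hij) Hle). }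
  destruct HN as [N HN].
  assert (HN' : forall i, exists j, i < j /\ (N <= i -> le (f i) (f j))).
  { intro i. destruct (le_lt_dec N i) as [l|l].
    - destruct (HN i l) as [j [H1 H2]]; exists j; auto.
    - exists (S i); split; [lia | intro; lia]. }
  pose (nx := fun i => proj1_sig (cid _ (HN' i))).
  assert (Hnx : forall i, i < nx i /\ (N <= i -> le (f i) (f (nx i))))
    by (intro i; exact (proj2_sig (cid _ (HN' i)))).
  pose (phi := fix phi n := match n with 0 => N | S n => nx (phi n) end).
  assert (HphiN : forall n, N <= phi n).
  { induction n; simpl; [lia|]. destruct (Hnx (phi n)); lia. }
  exists phi. split; intro i; simpl; apply Hnx; auto.
Qed.

Lemma minimal (P : Z -> Prop) z : P z -> exists w, P w /\ forall y, ltz y w -> ~ P y.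
Proof.
  intro Pz. apply NNPP; intro Hn.
  assert (Hs: forall w, exists w', P w -> P w' /\ ltz w' w).
  { intro w. destruct (classic (P w)) as [Pw|nPw].
    - apply NNPP; intro H1. apply Hn. exists w. split; auto.
      intros y Hy Py. apply H1. exists y. auto.
    - exists w. intro; contradiction. }
  pose (nx := fun w => proj1_sig (cid _ (Hs w))).
  assert (Hnx : forall w, P w -> P (nx w) /\ ltz (nx w) w)
    by (intro w; exact (proj2_sig (cid _ (Hs w)))).
  pose (x := fix x n := match n with 0 => z | S n => nx (x n) end).
  assert (HP : forall n, P (x n)) by (induction n; simpl; [auto | apply Hnx; auto]).
  assert (Hd : forall n, ltz (x (S n)) (x n)) by (intro n; simpl; apply Hnx; auto).
  assert (Hlt : forall i j, i < j -> ltz (x j) (x i)).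
  { intros i j Hij. induction Hij; [apply Hd|]. eapply lt_trans'; [apply Hd|exact IHHij]. }
  destruct (Hwqo x) as [i [j [Hij Hle]]]. destruct (Hlt i j Hij) as [H1 H2].
  apply H2. destruct Hpo as [_ [Ha _]]. apply Ha; auto.
Qed.

Lemma bwd k (B : Z -> Prop) (HB : forall z, B z -> rank_lt_omega_mul le z k) z :
  Anext le B z -> rank_lt_omega_mul le z (S k).
Proof.
  destruct Hpo as [Hrf [Ha Ht]].
  intro HA. apply NNPP; intro Hn.
  destruct (minimal (fun w => le w z /\ ~ rank_lt_omega_mul le w (S k)) z)
    as [w [[Hwz Hw] Hmin]]; [split; [apply Hrf | auto]|].
  assert (Hy : forall y, ltz y w -> rank_lt_omega_mul le y (S k)).
  { intros y Hy. apply NNPP; intro H. apply (Hmin y Hy).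
    split; [eapply Ht; [apply Hy|apply Hwz] | auto]. }
  assert (Hm : forall m, exists y, ltz y w /\ ~ rk_le le y (k,m)).
  { intro m. apply NNPP; intro H. apply Hw. exists (k, S m). split; [simpl; lia|].
    constructor. intros y Hyw. exists (k,m). split; [unfold olt; simpl; lia|].
    apply NNPP; intro H'. apply H. exists y; auto. }
  assert (Hb : forall y m, ltz y w -> exists b, m < b /\ rk_le le y (k,b)).
  { intros y m Hyw. destruct (Hy y Hyw) as [[a b] [Ha' Hr]]. simpl in Ha'.
    exists (S (m + b)). split; [lia|]. apply rk_mono with (a,b); auto.
    left; unfold olt; simpl; lia. }
  assert (Hnk : forall y m, ~ rk_le le y (k,m) -> ~ rank_lt_omega_mul le y k).
  { intros y m H [[a b] [Ha' Hr]]. apply H. apply rk_mono with (a,b); auto.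
    left; unfold olt; simpl in *; lia. }
  pose (Y := fun m => proj1_sig (cid _ (Hm m))).
  assert (HY : forall m, ltz (Y m) w /\ ~ rk_le le (Y m) (k,m))
    by (intro m; exact (proj2_sig (cid _ (Hm m)))).
  assert (Hb' : forall m, exists b, m < b /\ rk_le le (Y m) (k,b))
    by (intro m; apply Hb; apply HY).
  pose (bnd := fun m => proj1_sig (cid _ (Hb' m))).
  assert (Hbnd : forall m, m < bnd m /\ rk_le le (Y m) (k, bnd m))
    by (intro m; exact (proj2_sig (cid _ (Hb' m)))).
  pose (idx := fix idx n := match n with 0 => 0 | S n => bnd (idx n) end).
  assert (Hidx : forall i j, i <= j -> idx i <= idx j).
  { intros i j Hij. induction Hij; [lia|]. simpl. destruct (Hbnd (idx m)); lia. }
  pose (f := fun n => Y (idx n)).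
  assert (Hdist : forall i j, i < j -> f i <> f j).
  { intros i j Hij E. apply (proj2 (HY (idx j))). fold (f j). rewrite <- E.
    unfold f. apply rk_mono with (k, idx (S i)); [apply Hbnd|].
    assert (idx (S i) <= idx j) by (apply Hidx; lia).
    destruct (Nat.eq_dec (idx (S i)) (idx j)) as [e|e];
      [right; rewrite e; reflexivity | left; unfold olt; cbn [fst snd]; lia]. }
  destruct (ramsey f) as [phi [Hphi1 Hphi2]].
  pose (s := fun n => f (phi n)).
  assert (Hacc : acc_cand le s).
  { intro i. split; [apply Hphi2 | apply Hdist; apply Hphi1]. }
  assert (Hbel : below le s z).
  { intro i. eapply Ht; [apply (HY (idx (phi i)))|exact Hwz]. }
  destruct (HA s Hacc Hbel) as [i Hi].
  apply (Hnk (s i) (idx (phi i)) (proj2 (HY (idx (phi i))))). apply HB; auto.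
Qed.

Lemma key n : forall z, rank_lt_omega_mul le z n <-> Aupto le n z.
Proof.
  induction n.
  - intro z; simpl; split; [intros [[a b] [Ha' _]]; simpl in Ha'; lia | tauto].
  - intro z. simpl. split.
    + intro H. right. apply fwd with (k := n); [intros; apply IHn; auto | auto].
    + intros [H|H].
      * apply IHn in H. destruct H as [p [Hp Hr]]; exists p; split; [lia|auto].
      * apply bwd with (B := Aupto le n); auto. intros; apply IHn; auto.
Qed.

End S.

Theorem lemma15 (Z : Type) (le : Z -> Z -> Prop)
  (Hwpo : is_wpo le) (Hcount : countable Z) (n : nat) :
  forall z : Z, rank_lt_omega_mul le z n <-> A le n z.
Proof.
  destruct Hwpo as [Hpo Hw]. intro z. destruct n as [|n]; simpl.
  - split; [intros [[a b] [Ha' _]]; simpl in Ha'; lia | tauto].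
  - split.
    + apply fwd; auto. intros; apply key; auto.
    + apply bwd; auto. intros; apply key; auto.
Qed.
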